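(* Let $K_1$ and $K_2$ be non-trivial $\mathcal R$-dioids. Then the tensor product $K_1\otimes_{\mathcal R}K_2$ is non-trivial, and the canonical $\mathcal R$-morphisms $\top_1:K_1\to K_1\otimes_{\mathcal R}K_2$ and $\top_2:K_2\to K_1\otimes_{\mathcal R}K_2$ are injective.
   Context: An $\mathcal R$-dioid is a dioid in which every regular subset of its multiplicative monoid has a supremum $\sum A$ with $\sum(AB)=(\sum A)(\sum B)$ (equivalently a $*$-continuous Kleene algebra); it is non-trivial if $0\ne 1$. An $\mathcal R$-morphism is a dioid morphism preserving suprema of regular sets. The tensor product $K_1\otimes_{\mathcal R}K_2$ is an $\mathcal R$-dioid with $\mathcal R$-morphisms $\top_1,\top_2$ from $K_1,K_2$ whose images commute elementwise, universal: every pair of elementwise commuting $\mathcal R$-morphisms $f:K_1\to K$, $g:K_2\to K$ into an $\mathcal R$-dioid $K$ factors uniquely as $f=h\circ\top_1$, $g=h\circ\top_2$ with an $\mathcal R$-morphism $h$. Concretely it is $\mathcal R(K_1\times K_2)/{\equiv}$, the regular subsets of the product of the multiplicative monoids modulo the least $\mathcal R$-congruence identifying $A\times B$ with $\{(\sum A,\sum B)\}$ for regular $A\subseteq K_1$, $B\subseteq K_2$, with $\top_1(a)=[\{(a,1)\}]$, $\top_2(b)=[\{(1,b)\}]$. (An $\mathcal R$-congruence is a semiring congruence such that regular sets with equal downward closures modulo it have congruent suprema.) *)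

(* Defs.v *)
From HB Require Import structures.
From mathcomp Require Import all_boot all_algebra.
Set Implicit Arguments. Unset Strict Implicit. Unset Printing Implicit Defensive.
Import GRing.Theory.
Local Open Scope ring_scope.

Definition pset (T : Type) := T -> Prop.

Section Monoid.
Variables (M : Type) (mul : M -> M -> M) (one : M).

Definition set_empty : pset M := fun _ => False.
Definition set_single (x : M) : pset M := fun y => y = x.
Definition set_union (A B : pset M) : pset M := fun x => A x \/ B x.
Definition set_prod (A B : pset M) : pset M :=
  fun x => exists a b, A a /\ B b /\ x = mul a b.
Fixpoint set_pow (A : pset M) (n : nat) : pset M :=
  match n with
  | O => set_single one
  | S n => set_prod A (set_pow A n)
  end.
Definition set_star (A : pset M) : pset M := fun x => exists n, set_pow A n x.

(* Regular subsets of the submonoid of M carried by P (P must contain one and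
   be closed under mul): the least family containing the finite subsets of P,
   closed under union, product and star (and extensional equality). *)
Inductive regular_in (P : pset M) : pset M -> Prop :=
| reg_empty : regular_in P set_empty
| reg_single x : P x -> regular_in P (set_single x)
| reg_union A B : regular_in P A -> regular_in P B -> regular_in P (set_union A B)
| reg_prod A B : regular_in P A -> regular_in P B -> regular_in P (set_prod A B)
| reg_star A : regular_in P A -> regular_in P (set_star A)
| reg_ext A B : (forall x, A x <-> B x) -> regular_in P A -> regular_in P B.

Definition regular : pset M -> Prop := regular_in (fun _ => True).
End Monoid.

Definition dioid (K : pzSemiRingType) : Prop := forall x : K, x + x = x.

Definition dle (K : pzSemiRingType) (x y : K) : Prop := x + y = y.

Definition is_sup (K : pzSemiRingType) (A : pset K) (s : K) : Prop :=
  (forall a, A a -> dle a s) /\ (forall u, (forall a, A a -> dle a u) -> dle s u).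

Definition regK (K : pzSemiRingType) : pset K -> Prop :=
  regular (fun x y : K => x * y) 1.

Definition R_dioid (K : pzSemiRingType) : Prop :=
  dioid K /\
  (forall A : pset K, regK A -> exists s, is_sup A s) /\
  (forall (A B : pset K) (a b : K), regK A -> regK B ->
      is_sup A a -> is_sup B b -> is_sup (set_prod (fun x y : K => x * y) A B) (a * b)).

Definition nontrivial (K : pzSemiRingType) : Prop := (0 : K) <> 1.

Section Tensor.
Variables K1 K2 : pzSemiRingType.

Definition pmul (x y : K1 * K2) : K1 * K2 := (x.1 * y.1, x.2 * y.2).
Definition pone : K1 * K2 := (1, 1).

Definition regP : pset (K1 * K2) -> Prop := regular pmul pone.

Definition Tzero : pset (K1 * K2) := @set_empty _.
Definition Tone : pset (K1 * K2) := set_single pone.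
Definition Tadd : pset (K1 * K2) -> pset (K1 * K2) -> pset (K1 * K2) := @set_union _.
Definition Tmul : pset (K1 * K2) -> pset (K1 * K2) -> pset (K1 * K2) := set_prod pmul.

Definition regT : pset (pset (K1 * K2)) -> Prop := regular_in Tmul Tone regP.

(* supremum in R(K1 x K2) of a family of its elements: the union *)
Definition bigU (F : pset (pset (K1 * K2))) : pset (K1 * K2) :=
  fun x => exists A, F A /\ A x.

Definition rect (A : pset K1) (B : pset K2) : pset (K1 * K2) :=
  fun x => A x.1 /\ B x.2.

(* An R-congruence on R(K1 x K2) (a relation on its elements, i.e. on the
   regular subsets; behaviour on non-regular sets is irrelevant) which
   moreover identifies A x B with {(sup A, sup B)}. *)
Definition Rcong (th : pset (K1 * K2) -> pset (K1 * K2) -> Prop) : Prop :=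
  (forall A, regP A -> th A A) /\
  (forall A B, regP A -> regP B -> th A B -> th B A) /\
  (forall A B C, regP A -> regP B -> regP C -> th A B -> th B C -> th A C) /\
  (forall A A' B B', regP A -> regP A' -> regP B -> regP B' ->
      th A A' -> th B B' -> th (Tadd A B) (Tadd A' B') /\ th (Tmul A B) (Tmul A' B')) /\
  (* regular sets with equal downward closures modulo th have congruent sups;
     the order modulo th is  X <= Y  iff  th (X + Y) Y *)
  (forall F G : pset (pset (K1 * K2)), regT F -> regT G ->
      (forall A, F A -> exists B, G B /\ th (Tadd A B) B) ->
      (forall B, G B -> exists A, F A /\ th (Tadd B A) A) ->
      th (bigU F) (bigU G)).

Definition Rcong_gen (th : pset (K1 * K2) -> pset (K1 * K2) -> Prop) : Prop :=
  Rcong th /\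
  (forall (A : pset K1) (B : pset K2) (a : K1) (b : K2),
      regK A -> regK B -> is_sup A a -> is_sup B b ->
      th (rect A B) (set_single (a, b))).

Definition tequiv (X Y : pset (K1 * K2)) : Prop :=
  forall th, Rcong_gen th -> th X Y.

(* canonical morphisms top1, top2 (as representatives) *)
Definition top1 (a : K1) : pset (K1 * K2) := set_single (a, 1).
Definition top2 (b : K2) : pset (K1 * K2) := set_single (1, b).

Definition tensor_nontrivial : Prop := ~ tequiv Tzero Tone.
End Tensor.

(* Main.v *)
Require Import Defs.
From Stdlib Require Import Classical.
From mathcomp Require Import all_boot all_algebra.
Local Open Scope ring_scope.
Import GRing.Theory.

Lemma dle_mulr (K : pzSemiRingType) (x y z : K) : dle x y -> dle (x*z) (y*z).
Proof. rewrite /dle => H; by rewrite -mulrDl H. Qed.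
Lemma dle_mull (K : pzSemiRingType) (x y z : K) : dle x y -> dle (z*x) (z*y).
Proof. rewrite /dle => H; by rewrite -mulrDr H. Qed.
Lemma dle_trans (K : pzSemiRingType) (x y z : K) : dle x y -> dle y z -> dle x z.
Proof. rewrite /dle => H1 H2; by rewrite -H2 addrA H1. Qed.
Lemma dle0 (K : pzSemiRingType) (x : K) : dle x 0 -> x = 0.
Proof. rewrite /dle => H; by rewrite -[x]addr0. Qed.
Lemma sup_single (K : pzSemiRingType) (HK : dioid K) (q : K) : is_sup (set_single q) q.
Proof. split => [a -> | u Hu]; [exact: HK | exact: Hu]. Qed.
Lemma sup_sub0 (K : pzSemiRingType) (A : pset K) a :
  is_sup A a -> (forall x, A x -> x = 0) -> a = 0.
Proof. case=> _ H Hz; apply: dle0; apply: H => x /Hz ->; by rewrite /dle add0r. Qed.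
Lemma sup_mulr (K : pzSemiRingType) (HK : R_dioid K) (A : pset K) a q :
  regK A -> is_sup A a -> is_sup (set_prod (fun x y : K => x * y) A (set_single q)) (a * q).
Proof.
case: HK => D [_ H] rA sA; apply: H => //; [exact: reg_single | exact: sup_single].
Qed.
Lemma sup_mull (K : pzSemiRingType) (HK : R_dioid K) (A : pset K) a q :
  regK A -> is_sup A a -> is_sup (set_prod (fun x y : K => x * y) (set_single q) A) (q * a).
Proof.
case: HK => D [_ H] rA sA; apply: H => //; [exact: reg_single | exact: sup_single].
Qed.

Arguments dle_mulr {K x y} z.
Arguments dle_mull {K x y} z.
Arguments dle_trans {K x y z}.
Arguments dle0 {K x}.
Arguments sup_single {K} HK q.
Arguments sup_sub0 {K A a}.
Arguments sup_mulr {K} HK {A a} q.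
Arguments sup_mull {K} HK {A a} q.

Section S.
Variables K1 K2 : pzSemiRingType.
Hypotheses (R1 : R_dioid K1) (R2 : R_dioid K2).

Inductive Cl (X : pset (K1 * K2)) : pset (K1 * K2) :=
| C_in p : X p -> Cl X p
| C_down p q : dle p.1 q.1 -> dle p.2 q.2 -> Cl X q -> Cl X p
| C_rect (A : pset K1) (B : pset K2) a b : regK A -> regK B -> is_sup A a -> is_sup B b ->
    (forall p, rect A B p -> Cl X p) -> Cl X (a, b).

Lemma Cl_mono X Y : (forall p, X p -> Cl Y p) -> forall p, Cl X p -> Cl Y p.
Proof.
move=> H p; elim => {p} [p Xp | p q h1 h2 _ IH | A B a b rA rB sA sB _ IH].
- exact: H.
- exact: C_down h1 h2 IH.
- exact: C_rect rA rB sA sB IH.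
Qed.

Lemma Cl_mul1 X Y p q : X p -> Cl Y q -> Cl (Tmul X Y) (pmul p q).
Proof.
move=> Xp; elim => {q} [q Yq | q q' h1 h2 _ IH | A B a b rA rB sA sB _ IH].
- apply: C_in; by exists p, q.
- apply: (@C_down _ _ (pmul p q')) IH => /=; exact: dle_mull.
- rewrite /pmul /=.
  apply: (@C_rect _ (set_prod (fun x y : K1 => x*y) (set_single p.1) A)
                 (set_prod (fun x y : K2 => x*y) (set_single p.2) B)).
  + by apply: reg_prod => //; exact: reg_single.
  + by apply: reg_prod => //; exact: reg_single.
  + exact: sup_mull.
  + exact: sup_mull.
  + move=> [r1 r2] [/= [x [y [-> [Ay ->]]]] [x' [y' [-> [By' ->]]]]].
    exact: (IH (y, y')).
Qed.

Lemma Cl_mul X Y p q : Cl X p -> Cl Y q -> Cl (Tmul X Y) (pmul p q).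
Proof.
move=> Hp; elim: Hp q => {p} [p Xp | p p' h1 h2 _ IH | A B a b rA rB sA sB _ IH] q Hq.
- exact: Cl_mul1.
- apply: (@C_down _ _ (pmul p' q)) (IH q Hq) => /=; exact: dle_mulr.
- rewrite /pmul /=.
  apply: (@C_rect _ (set_prod (fun x y : K1 => x*y) A (set_single q.1))
                 (set_prod (fun x y : K2 => x*y) B (set_single q.2))).
  + by apply: reg_prod => //; exact: reg_single.
  + by apply: reg_prod => //; exact: reg_single.
  + exact: sup_mulr.
  + exact: sup_mulr.
  + move=> [r1 r2] [/= [x [y [Ax [-> ->]]]] [x' [y' [Ax' [-> ->]]]]].
    exact: (IH (x, x') (conj Ax Ax')).
Qed.

Definition th (X Y : pset (K1 * K2)) :=
  (forall p, Cl X p -> Cl Y p) /\ (forall p, Cl Y p -> Cl X p).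

Lemma th_gen : Rcong_gen th.
Proof.
split; [split; [|split; [|split; [|split]]]|].
- by move=> A _; split.
- by move=> A B _ _ [H1 H2]; split.
- by move=> A B C _ _ _ [H1 H2] [H3 H4]; split => p Hp; auto.
- move=> A A' B B' _ _ _ _ [HA1 HA2] [HB1 HB2]; split; split; apply: Cl_mono.
  + move=> p [Ap|Bp].
    * apply: (@Cl_mono A' _); first by move=> r Ar; apply: C_in; left.
      by apply: HA1; apply: C_in.
    * apply: (@Cl_mono B' _); first by move=> r Ar; apply: C_in; right.
      by apply: HB1; apply: C_in.
  + move=> p [Ap|Bp].
    * apply: (@Cl_mono A _); first by move=> r Ar; apply: C_in; left.
      by apply: HA2; apply: C_in.
    * apply: (@Cl_mono B _); first by move=> r Ar; apply: C_in; right.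
      by apply: HB2; apply: C_in.
  + move=> p [x [y [Ax [By ->]]]]; apply: Cl_mul.
    * by apply: HA1; apply: C_in.
    * by apply: HB1; apply: C_in.
  + move=> p [x [y [Ax [By ->]]]]; apply: Cl_mul.
    * by apply: HA2; apply: C_in.
    * by apply: HB2; apply: C_in.
- move=> F G _ _ HF HG; split; apply: Cl_mono.
  + move=> p [A [FA Ap]]; case: (HF A FA) => B [GB [H1 _]].
    apply: (@Cl_mono B _); first by move=> r Br; apply: C_in; exists B.
    by apply: H1; apply: C_in; left.
  + move=> p [B [GB Bp]]; case: (HG B GB) => A [FA [H1 _]].
    apply: (@Cl_mono A _); first by move=> r Ar; apply: C_in; exists A.
    by apply: H1; apply: C_in; left.
- move=> A B a b rA rB sA sB; split; apply: Cl_mono.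
  + move=> [x y] [/= Ax By]; apply: (@C_down _ _ (a,b)) => /=.
    * by case: sA => H _; apply: H.
    * by case: sB => H _; apply: H.
    * exact: C_in.
  + move=> p ->; apply: (@C_rect _ A B a b rA rB sA sB) => r Hr; exact: C_in.
Qed.

Lemma inv0 p : Cl (@Tzero K1 K2) p -> p.1 = 0 \/ p.2 = 0.
Proof.
elim => {p} [p [] | p q h1 h2 _ [e|e] | A B a b _ _ sA sB _ IH].
- left => /=; move: h1; rewrite e; exact: dle0.
- right => /=; move: h2; rewrite e; exact: dle0.
- case: (classic (exists x, A x /\ x <> 0)) => [[x [Ax nx]]|H].
  + right => /=; apply: (sup_sub0 sB) => y By.
    by case: (IH (x, y) (conj Ax By)).
  + left => /=; apply: (sup_sub0 sA) => x Ax; apply: NNPP => nx; apply: H; by exists x.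
Qed.

Lemma inv1 a p : Cl (@top1 K1 K2 a) p -> dle p.1 a \/ p.2 = 0.
Proof.
elim => {p} [p -> | p q h1 h2 _ [e|e] | A B a0 b _ _ sA sB _ IH].
- left => /=; case: R1 => D _; exact: D.
- left => /=; exact: dle_trans h1 e.
- right => /=; move: h2; rewrite e; exact: dle0.
- case: (classic (exists y, B y /\ y <> 0)) => [[y [By ny]]|H].
  + left => /=; case: sA => _ H; apply: H => x Ax.
    by case: (IH (x, y) (conj Ax By)).
  + right => /=; apply: (sup_sub0 sB) => y By; apply: NNPP => ny; apply: H; by exists y.
Qed.

Lemma inv2 b p : Cl (@top2 K1 K2 b) p -> p.1 = 0 \/ dle p.2 b.
Proof.
elim => {p} [p -> | p q h1 h2 _ [e|e] | A B a0 b0 _ _ sA sB _ IH].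
- right => /=; case: R2 => D _; exact: D.
- left => /=; move: h1; rewrite e; exact: dle0.
- right => /=; exact: dle_trans h2 e.
- case: (classic (exists x, A x /\ x <> 0)) => [[x [Ax nx]]|H].
  + right => /=; case: sB => _ H; apply: H => y By.
    by case: (IH (x, y) (conj Ax By)).
  + left => /=; apply: (sup_sub0 sA) => x Ax; apply: NNPP => nx; apply: H; by exists x.
Qed.

End S.

Lemma dle_antisym (K : pzSemiRingType) (x y : K) : dle x y -> dle y x -> x = y.
Proof. rewrite /dle => H1 H2; by rewrite -H2 addrC H1. Qed.

Theorem lemma2 (K1 K2 : pzSemiRingType) :
  R_dioid K1 -> R_dioid K2 -> nontrivial K1 -> nontrivial K2 ->
  @tensor_nontrivial K1 K2 /\
  (forall a a' : K1, @tequiv K1 K2 (@top1 K1 K2 a) (@top1 K1 K2 a') -> a = a') /\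
  (forall b b' : K2, @tequiv K1 K2 (@top2 K1 K2 b) (@top2 K1 K2 b') -> b = b').
Proof.
move=> R1 R2 n1 n2; have G := @th_gen K1 K2 R1 R2.
split; [|split].
- move=> Ht; case: (Ht _ G) => _ H.
  have := H _ (@C_in _ _ _ _ (erefl (@pone K1 K2))).
  by case/inv0 => /= e; [apply: n1 | apply: n2].
- move=> a a' Ht; case: (Ht _ G) => H1 H2.
  apply: dle_antisym.
  + case: (@inv1 _ _ R1 _ _ (H1 _ (@C_in _ _ _ _ (erefl (a, 1))))) => //= e; by case: (n2 (esym e)).
  + case: (@inv1 _ _ R1 _ _ (H2 _ (@C_in _ _ _ _ (erefl (a', 1))))) => //= e; by case: (n2 (esym e)).
- move=> b b' Ht; case: (Ht _ G) => H1 H2.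
  apply: dle_antisym.
  + case: (@inv2 _ _ R2 _ _ (H1 _ (@C_in _ _ _ _ (erefl (1, b))))) => //= e; by case: (n1 (esym e)).
  + case: (@inv2 _ _ R2 _ _ (H2 _ (@C_in _ _ _ _ (erefl (1, b'))))) => //= e; by case: (n1 (esym e)).
Qed.
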